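(* For every $\epsilon>0$ there is $\epsilon'>0$ depending only on $\epsilon$ such that for every $f:\{0,1\}^n\to\{-1,1\}$ with $\|f\|_{U_3}\ge\epsilon$, $$\mathbb E_{x,y}\sum_{\alpha,\beta}\hat{f_x}^2(\alpha)\,\hat{f_y}^2(\beta)\,\widehat{f_{x+y}}^2(\alpha+\beta)\ge\epsilon'.$$
   Context: $\{0,1\}^n$ is identified with $\mathbb F_2^n$; $x,y$ independent uniform. $\hat h(\alpha)=\mathbb E_z h(z)(-1)^{\langle\alpha,z\rangle}$; $f_y(x)=f(x)f(x+y)$. $\|f\|_{U_3}=\big[\mathbb E_{x,y_1,y_2,y_3}\prod_{S\subseteq[3]} f(x+\sum_{i\in S}y_i)\big]^{1/8}$. *)

(* Defs.v *)
From HB Require Import structures.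
From mathcomp Require Import all_boot all_order all_algebra.
From mathcomp Require Import reals exp.
Set Implicit Arguments. Unset Strict Implicit. Unset Printing Implicit Defensive.
Import Order.TTheory GRing.Theory Num.Theory.
Local Open Scope ring_scope.

(* {0,1}^n identified with F_2^n, represented as row vectors over 'F_2. *)
Notation cube n := 'rV['F_2]_n.

Section Defs.
Variable R : realType.

Definition Ex n (h : cube n -> R) : R :=
  (#|{: cube n}|%:R)^-1 * \sum_(z : cube n) h z.

Definition ip n (a z : cube n) : 'F_2 := \sum_(i < n) a ord0 i * z ord0 i.

Definition chi n (a z : cube n) : R := if ip a z == 0 then 1 else -1.

Definition fourier n (h : cube n -> R) (a : cube n) : R :=
  Ex (fun z => h z * chi a z).

Definition fder n (f : cube n -> R) (y : cube n) : cube n -> R :=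
  fun x => f x * f (x + y).

Definition U3norm n (f : cube n -> R) : R :=
  powR (Ex (fun x => Ex (fun y1 => Ex (fun y2 => Ex (fun y3 =>
    \prod_(S : {set 'I_3})
      f (x + \sum_(i in S) nth 0 [:: y1; y2; y3] i))))))
  (8%:R^-1).

End Defs.

(* Main.v *)
Require Import Defs.
From HB Require Import structures.
From mathcomp Require Import all_boot all_order all_algebra.
From mathcomp Require Import reals exp ring.
Import Order.TTheory GRing.Theory Num.Theory.
Local Open Scope ring_scope.
Set Implicit Arguments. Unset Strict Implicit.
Lemma F2cases (x : 'F_2) : x = 0 \/ x = 1.
Proof. case: x => [[|[|k]] Hk]; [left|right|]; try by apply/val_inj. by []. Qed.
Lemma F2xx (x : 'F_2) : x + x = 0.
Proof. by case: (F2cases x) => ->; apply/val_inj. Qed.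

Lemma CS (R : realFieldType) (I : finType) (u v : I -> R) :
  (\sum_i u i * v i) ^+ 2 <= (\sum_i u i ^+ 2) * (\sum_i v i ^+ 2).
Proof.
pose D i j := u i ^+ 2 * v j ^+ 2 - (u i * v i) * (u j * v j).
have H : 0 <= \sum_i \sum_j (D i j + D j i).
  apply: sumr_ge0 => i _; apply: sumr_ge0 => j _.
  have -> : D i j + D j i = (u i * v j - u j * v i) ^+ 2 by rewrite /D; ring.
  exact: sqr_ge0.
have E1 : \sum_i \sum_j D i j = (\sum_i u i ^+ 2) * (\sum_i v i ^+ 2) - (\sum_i u i * v i) ^+ 2.
  rewrite expr2 !big_distrlr /= -sumrB; apply: eq_bigr => i _; rewrite -sumrB.
  by apply: eq_bigr.
have E : \sum_i \sum_j (D i j + D j i) = 2 * (\sum_i \sum_j D i j).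
  under eq_bigr do rewrite big_split /=.
  rewrite big_split /= [X in _ + X = _]exchange_big /=.
  by rewrite mulr2n mulrDl mul1r.
move: H; rewrite E E1 pmulr_rge0 // subr_ge0 //.
Qed.

Section T.
Variables (R : comRingType) (V : zmodType).
Definition g3 (b0 b1 b2 : bool) : {set 'I_3} := [set i : 'I_3 | nth false [:: b0; b1; b2] i].
Lemma prod_sets (H : {set 'I_3} -> R) :
  \prod_(S : {set 'I_3}) H S = \prod_(b0 : bool) \prod_(b1 : bool) \prod_(b2 : bool) H (g3 b0 b1 b2).
Proof.
rewrite pair_big pair_big /=.
rewrite (reindex (fun q : (bool * bool) * bool => g3 q.1.1 q.1.2 q.2)) //=.
exists (fun S : {set 'I_3} => ((@Ordinal 3 0 isT \in S, @Ordinal 3 1 isT \in S), @Ordinal 3 2 isT \in S)).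
  by move=> [[b0 b1] b2] _; rewrite /g3 !inE.
move=> S _; apply/setP => i; rewrite /g3 inE.
by case: i => [[|[|[|k]]] Hk] //=; congr (_ \in S); apply: val_inj.
Qed.
Lemma sum_g3 b0 b1 b2 (y1 y2 y3 : V) :
  \sum_(i in g3 b0 b1 b2) nth 0 [:: y1; y2; y3] i =
  (if b0 then y1 else 0) + ((if b1 then y2 else 0) + ((if b2 then y3 else 0))).
Proof.
rewrite big_mkcond /= !big_ord_recl big_ord0 /g3 !inE /=.
by case: b0; case: b1; case: b2; rewrite /= ?addr0 ?add0r.
Qed.
End T.

Section S.
Variables (R : realType) (n : nat).
Implicit Types (a b x y z w : cube n).

Lemma cube_xx x : x + x = 0.
Proof. by apply/matrixP => i j; rewrite !mxE F2xx. Qed.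

Lemma ip_addr a z w : ip a (z + w) = ip a z + ip a w.
Proof. by rewrite /ip -big_split; apply: eq_bigr => i _; rewrite mxE mulrDr. Qed.
Lemma ip_sym a z : ip a z = ip z a.
Proof. by rewrite /ip; apply: eq_bigr => i _; rewrite mulrC. Qed.

Lemma chiE a z : chi R a z = if ip a z == 0 then 1 else -1.
Proof. by []. Qed.

Lemma chi_addr a z w : chi R a (z + w) = chi R a z * chi R a w.
Proof.
rewrite !chiE ip_addr.
by case: (F2cases (ip a z)) => ->; case: (F2cases (ip a w)) => ->;
  rewrite ?mulr1 ?mul1r ?mulrNN ?mulr1 //.
Qed.
Lemma chi_sym a z : chi R a z = chi R z a.
Proof. by rewrite !chiE ip_sym. Qed.
Lemma chi_addl a b z : chi R (a + b) z = chi R a z * chi R b z.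
Proof. by rewrite chi_sym chi_addr !(chi_sym z). Qed.
Lemma chi_sq a z : chi R a z * chi R a z = 1.
Proof. by rewrite chiE; case: ifP; rewrite ?mulr1 ?mulrNN ?mulr1. Qed.

Definition NN : R := #|{: cube n}|%:R.
Lemma NN_gt0 : 0 < NN.
Proof. by rewrite /NN ltr0n; apply/card_gt0P; exists 0. Qed.
Lemma NN_neq0 : NN != 0. Proof. by rewrite gt_eqF // NN_gt0. Qed.

Lemma orth z : \sum_a chi R a z = if z == 0 then NN else 0.
Proof.
case: eqP => [->|/eqP nz].
  rewrite /NN -sumr_const; apply: eq_bigr => a _.
  by rewrite chiE /ip big1 // => i _; rewrite mxE mulr0.
have [i zi] : exists i, z ord0 i != 0.
  apply/existsP; apply: contraNT nz => /existsPn H.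
  by apply/eqP/matrixP => r j; rewrite !ord1 mxE; apply/eqP; apply: negbNE (H j).
have zi1 : z ord0 i = 1 by case: (F2cases (z ord0 i)) zi => ->.
set e : cube n := delta_mx ord0 i.
have che : chi R e z = -1.
  rewrite chiE /ip (bigD1 i) //= big1 => [|j ji].
    by rewrite !mxE !eqxx zi1 mulr1 addr0.
  by rewrite !mxE eqxx /= (negbTE ji) mul0r.
set S := \sum_a _.
have : S = - S.
  rewrite {1}/S (reindex_inj (addIr e)) /=.
  rewrite /S -mulN1r big_distrr /=; apply: eq_bigr => a _.
  by rewrite chi_addl che mulrC.
move/eqP; rewrite -subr_eq0 opprK -mulr2n mulrn_eq0 /= => /eqP //.
Qed.

Lemma cube_opp x : - x = x.
Proof. by apply/eqP; rewrite eq_sym -addr_eq0 cube_xx. Qed.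
Lemma cube_add_eq0 x y : (x + y == 0) = (x == y).
Proof. by rewrite addr_eq0 cube_opp. Qed.

Lemma fourierE (P : cube n -> R) a :
  fourier P a = NN^-1 * \sum_z P z * chi R a z.
Proof. by []. Qed.

Lemma sum_delta (G : cube n -> R) l :
  \sum_x G x * (if x == l then NN else 0) = G l * NN.
Proof.
rewrite (bigD1 l) //= eqxx big1 ?addr0 // => x /negbTE ->; by rewrite mulr0.
Qed.

Lemma finv (P : cube n -> R) l : \sum_a fourier P a * chi R a l = P l.
Proof.
under eq_bigr do rewrite fourierE -mulrA big_distrl /=.
rewrite -big_distrr /= exchange_big /=.
under eq_bigr do under eq_bigr do rewrite -mulrA -chi_addr.
under eq_bigr do rewrite -big_distrr /= orth cube_add_eq0.
by rewrite sum_delta mulrCA mulVf ?NN_neq0 // mulr1.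
Qed.

Lemma fshift (Q : cube n -> R) w a :
  fourier (fun z => Q (z + w)) a = fourier Q a * chi R a w.
Proof.
rewrite !fourierE -mulrA big_distrl /=; congr (_ * _).
rewrite (reindex_inj (addIr w)) /=; apply: eq_bigr => z _.
by rewrite -addrA cube_xx addr0 chi_addr !mulrA.
Qed.

Lemma parseval (P Q : cube n -> R) :
  \sum_a fourier P a * fourier Q a = NN^-1 * \sum_x P x * Q x.
Proof.
under eq_bigr do rewrite (fourierE Q) mulrCA big_distrr /=.
rewrite -big_distrr /= exchange_big /=; congr (_ * _).
apply: eq_bigr => x _.
under eq_bigr do rewrite mulrCA.
by rewrite -big_distrr /= finv mulrC.
Qed.

Lemma ftriple (B : cube n -> R) :
  \sum_a fourier B a ^+ 3 = NN^-1 * NN^-1 * \sum_w \sum_x B w * (B x * B (x + w)).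
Proof.
under eq_bigr do rewrite exprS expr2 {1}fourierE -mulrA big_distrl /=.
rewrite -big_distrr /= exchange_big /= -mulrA; congr (_ * _).
rewrite big_distrr /=; apply: eq_bigr => w _.
under eq_bigr do rewrite -mulrA (mulrC (chi _ _ _)) -mulrA -fshift.
by rewrite -big_distrr /= parseval mulrCA big_distrr.
Qed.

Lemma fab (P Q S : cube n -> R) :
  \sum_a \sum_b fourier P a * fourier Q b * fourier S (a + b)
  = NN^-1 * \sum_l P l * Q l * S l.
Proof.
have -> : \sum_a \sum_b fourier P a * fourier Q b * fourier S (a + b)
  = NN^-1 * \sum_l S l * ((\sum_a fourier P a * chi R a l)
             * (\sum_b fourier Q b * chi R b l)).
  under [X in _ = _ * X]eq_bigr => l _ do
    (rewrite big_distrlr /= big_distrr /=; under eq_bigr do rewrite big_distrr /=).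
  rewrite [in RHS]exchange_big /= big_distrr /=; apply: eq_bigr => a _.
  rewrite [in RHS]exchange_big /= big_distrr /=; apply: eq_bigr => b _.
  rewrite (fourierE S) mulrCA; congr (_ * _); rewrite big_distrr /=.
  by apply: eq_bigr => l _; rewrite chi_addl; ring.
congr (_ * _); apply: eq_bigr => l _; rewrite !finv; ring.
Qed.

Definition Ac (g : cube n -> R) (h : cube n) : R := NN^-1 * \sum_z g z * g (z + h).

Lemma fshift' (Q : cube n -> R) w a :
  fourier (fun z => Q (w + z)) a = fourier Q a * chi R a w.
Proof.
rewrite -fshift !fourierE; congr (_ * _); apply: eq_bigr => z _; by rewrite addrC.
Qed.

Lemma fsq (g : cube n -> R) a : fourier g a ^+ 2 = fourier (Ac g) a.
Proof.
have E : fourier (Ac g) a = NN^-1 * \sum_z g z * fourier (fun h => g (z + h)) a.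
  under [X in _ = _ * X]eq_bigr do rewrite fourierE.
  rewrite fourierE /Ac; congr (_ * _).
  rewrite (eq_bigr (fun h => \sum_z NN^-1 * (g z * g (z + h) * chi R a h))); last first.
    by move=> h _; rewrite big_distrr big_distrl /=; apply: eq_bigr => z _; ring.
  rewrite exchange_big /=; apply: eq_bigr => z _; rewrite !big_distrr /=.
  by apply: eq_bigr => h _; ring.
rewrite E; under eq_bigr do rewrite fshift'.
rewrite expr2 {1}fourierE -mulrA big_distrl /=; congr (_ * _).
by apply: eq_bigr => z _; ring.
Qed.
Lemma ExE (h : cube n -> R) : Ex h = NN^-1 * \sum_z h z.
Proof. by []. Qed.

Lemma AcS (f : cube n -> R) x l : Ac (fder f x) l = Ac (fder f l) x.
Proof.
rewrite /Ac /fder; congr (_ * _); apply: eq_bigr => z _.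
rewrite (addrC (z + l)) addrA (addrC x); ring.
Qed.

Lemma reorg (F : cube n -> cube n -> cube n -> R) :
  NN^-1 * \sum_x (NN^-1 * \sum_y (NN^-1 * \sum_l F x y l))
  = NN^-1 * \sum_l (NN^-1 * NN^-1 * \sum_x \sum_y F x y l).
Proof.
transitivity (\sum_x \sum_y \sum_l NN^-1 * NN^-1 * NN^-1 * F x y l).
  rewrite big_distrr /=; apply: eq_bigr => x _.
  rewrite mulrA big_distrr /=; apply: eq_bigr => y _.
  by rewrite mulrA big_distrr.
symmetry; rewrite big_distrr /=.
under eq_bigr do rewrite mulrA big_distrr /=.
under eq_bigr do under eq_bigr do rewrite big_distrr /=.
rewrite exchange_big /=; apply: eq_bigr => x _.
rewrite exchange_big /=; apply: eq_bigr => y _.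
apply: eq_bigr => l _; by rewrite !mulrA.
Qed.

Lemma target_eq (f : cube n -> R) :
  Ex (fun x => Ex (fun y =>
        \sum_(a : cube n) \sum_(b : cube n)
          (fourier (fder f x) a) ^+ 2 * (fourier (fder f y) b) ^+ 2
          * (fourier (fder f (x + y)) (a + b)) ^+ 2))
  = NN^-1 * \sum_l \sum_a fourier (fder f l) a ^+ 6.
Proof.
rewrite ExE.
under eq_bigr => x _ do (rewrite ExE; under eq_bigr => y _ do
   (under eq_bigr do under eq_bigr do rewrite !fsq; rewrite fab)).
under eq_bigr => x _ do under eq_bigr => y _ do under eq_bigr => l _ do
   rewrite (AcS f x l) (AcS f y l) (AcS f (x + y) l).
rewrite reorg; congr (_ * _); apply: eq_bigr => l _.
rewrite -[in RHS](eq_bigr _ (fun a _ => esym (exprM _ 2 3))).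
under [in RHS]eq_bigr do rewrite fsq.
rewrite ftriple; congr (_ * _); apply: eq_bigr => x _; apply: eq_bigr => y _.
by rewrite (addrC y) mulrA.
Qed.

Lemma swapE (G : cube n -> cube n -> R) :
  NN^-1 * \sum_a (NN^-1 * \sum_b G a b) = NN^-1 * \sum_b (NN^-1 * \sum_a G a b).
Proof.
transitivity (\sum_a \sum_b NN^-1 * (NN^-1 * G a b)).
  rewrite big_distrr; apply: eq_bigr => a _; by rewrite !big_distrr.
rewrite exchange_big big_distrr /=; apply: eq_bigr => b _; by rewrite !big_distrr.
Qed.

Lemma AcAc (g : cube n -> R) x :
  Ac g x * Ac g x = NN^-1 * \sum_z (NN^-1 * \sum_y g z * g (z + x) * (g (z + y) * g (z + y + x))).
Proof.
rewrite /Ac -mulrA; congr (_ * _); rewrite big_distrl /=; apply: eq_bigr => z _.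
rewrite mulrCA; congr (_ * _); rewrite big_distrr /= (reindex_inj (addrI z)) /=.
by apply: eq_bigr => y _.
Qed.

Lemma X_eq (f : cube n -> R) :
  Ex (fun x => Ex (fun y1 => Ex (fun y2 => Ex (fun y3 =>
    \prod_(S : {set 'I_3})
      f (x + \sum_(i in S) nth 0 [:: y1; y2; y3] i)))))
  = NN^-1 * \sum_h \sum_a fourier (fder f h) a ^+ 4.
Proof.
rewrite ExE; under eq_bigr => x _ do (rewrite ExE; under eq_bigr => y1 _ do
  (rewrite ExE; under eq_bigr => y2 _ do (rewrite ExE;
  under eq_bigr => y3 _ do rewrite prod_sets !big_bool !sum_g3 /= ?addr0 ?add0r))).
under [in RHS]eq_bigr => h _ do
  (under eq_bigr do rewrite -[4%N]/(2*2)%N exprM fsq expr2; rewrite parseval).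
under [in RHS]eq_bigr => h _ do under eq_bigr => x _ do rewrite AcAc.
under [in RHS]eq_bigr => h _ do rewrite swapE.
rewrite [in RHS]swapE.
congr (_ * _); apply: eq_bigr => z _; congr (_ * _); apply: eq_bigr => h _.
congr (_ * _); apply: eq_bigr => x _; congr (_ * _); apply: eq_bigr => y _.
rewrite /fder.
have e1 : z + x + h = z + (h + x) by rewrite (addrC h x) addrA.
have e2 : z + y + h = z + (h + y) by rewrite (addrC h y) addrA.
have e3 : z + y + x = z + (x + y) by rewrite (addrC x y) addrA.
have e4 : z + y + x + h = z + (h + (x + y)) by rewrite (addrC x y) (addrC h (y + x)) !addrA.
rewrite e4 e3 e2 e1; ring.
Qed.

Lemma parseval1 (f : cube n -> R) h : (forall x, f x = 1 \/ f x = -1) ->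
  \sum_a fourier (fder f h) a ^+ 2 = 1.
Proof.
move=> pm; under eq_bigr do rewrite expr2.
rewrite parseval.
rewrite (eq_bigr (fun _ => 1)); last first.
  move=> x _; rewrite /fder.
  have sq y : f y * f y = 1 by case: (pm y) => ->; rewrite ?mulr1 ?mulrNN ?mulr1.
  by rewrite mulrACA !sq mulr1.
by rewrite sumr_const mulVf // NN_neq0.
Qed.

Lemma step6 (f : cube n -> R) h : (forall x, f x = 1 \/ f x = -1) ->
  (\sum_a fourier (fder f h) a ^+ 4) ^+ 2 <= \sum_a fourier (fder f h) a ^+ 6.
Proof.
move=> pm.
have := CS (fun a => fourier (fder f h) a) (fun a => fourier (fder f h) a ^+ 3).
rewrite parseval1 // mul1r /=.
have E1 : \sum_a fourier (fder f h) a ^+ 4 = \sum_a fourier (fder f h) a * fourier (fder f h) a ^+ 3.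
  by apply: eq_bigr => a _; rewrite -exprS.
have E2 : \sum_a fourier (fder f h) a ^+ 6 = \sum_a (fourier (fder f h) a ^+ 3) ^+ 2.
  by apply: eq_bigr => a _; rewrite -exprM.
by rewrite E1 E2.
Qed.

Lemma jensen (Y : cube n -> R) : (NN^-1 * \sum_h Y h) ^+ 2 <= NN^-1 * \sum_h Y h ^+ 2.
Proof.
have := CS (fun _ => 1) Y.
under eq_bigr do rewrite mul1r.
rewrite (eq_bigr (fun _ => 1) (fun _ _ => expr1n _ _)) sumr_const => H.
rewrite exprMn; have -> : NN^-1 * \sum_h Y h ^+ 2 = NN^-1 ^+ 2 * (NN * \sum_h Y h ^+ 2).
  by rewrite mulrA expr2 -(mulrA NN^-1) mulVf ?NN_neq0 // mulr1.
rewrite ler_wpM2l ?exprn_ge0 ?invr_ge0 ?ler0n //.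
Qed.
End S.

Unset Implicit Arguments.
Unset Strict Implicit.

Theorem corollary6p6 (R : realType) (eps : R) (heps : 0 < eps) :
  exists eps' : R, 0 < eps' /\
    forall (n : nat) (f : cube n -> R),
      (forall x, f x = 1 \/ f x = -1) ->
      eps <= U3norm f ->
      eps' <= Ex (fun x => Ex (fun y =>
        \sum_(a : cube n) \sum_(b : cube n)
          (fourier (fder f x) a) ^+ 2 * (fourier (fder f y) b) ^+ 2
          * (fourier (fder f (x + y)) (a + b)) ^+ 2)).
Proof.
exists (eps ^+ 16); split; first exact: exprn_gt0.
move=> n f pm hU.
rewrite target_eq.
move: hU; rewrite /U3norm X_eq.
set Y := fun h => \sum_a fourier (fder f h) a ^+ 4.
have Yge0 h : 0 <= Y h.
  by apply: sumr_ge0 => a _; apply: exprn_even_ge0.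
have NN0 : 0 <= NN R n by apply: ltW; exact: NN_gt0.
have X0 : 0 <= (NN R n)^-1 * \sum_h Y h by apply: mulr_ge0; [rewrite invr_ge0 | apply: sumr_ge0].
move: X0; set X := (NN R n)^-1 * \sum_h Y h => X0 hU.
have h8 : eps ^+ 8 <= X.
  have -> : X = powR X (8%:R^-1) ^+ 8.
    rewrite -powR_mulrn ?powR_ge0 // -powRrM mulVf ?pnatr_eq0 // powRr1 //.
  by rewrite lerXn2r // nnegrE ?powR_ge0 // ltW.
have h16 : eps ^+ 16 <= X ^+ 2.
  rewrite -[16%N]/(8 * 2)%N exprM lerXn2r // nnegrE // exprn_ge0 // ltW //.
apply: (le_trans h16); apply: (le_trans (jensen Y)).
rewrite ler_wpM2l ?invr_ge0 //; apply: ler_sum => h _; exact: step6.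
Qed.
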